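(* Let $\kappa, m, n$ be positive integers and $s$ a nonnegative integer such that $\kappa^4 m^4 n^4 - 32\kappa(m^2+n^2) = s^2$. Let $\beta$ be a positive integer. If $\kappa^2 m^2 n^2 - s = 2\beta$, then $\kappa$ divides $\beta^2$ and \[ \beta^3 + 64 = (\beta\kappa m^2 - 8)(\beta\kappa n^2 - 8). \] If $\kappa^2 m^2 n^2 - s \geq 2\beta$, then $\beta^3 + 64 \geq (\beta\kappa m^2 - 8)(\beta\kappa n^2 - 8)$. *)

(* Defs.v *)
From Stdlib Require Import ZArith.

(* Main.v *)
Require Import Defs.
From Stdlib Require Import ZArith Lia Psatz.
Open Scope Z_scope.

Theorem lemma2 (k m n s beta : Z)
  (hk : 0 < k) (hm : 0 < m) (hn : 0 < n) (hs : 0 <= s)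
  (hkey : k^4 * m^4 * n^4 - 32 * k * (m^2 + n^2) = s^2)
  (hbeta : 0 < beta) :
  (k^2 * m^2 * n^2 - s = 2 * beta ->
     (k | beta^2) /\
     beta^3 + 64 = (beta * k * m^2 - 8) * (beta * k * n^2 - 8)) /\
  (k^2 * m^2 * n^2 - s >= 2 * beta ->
     beta^3 + 64 >= (beta * k * m^2 - 8) * (beta * k * n^2 - 8)).
Proof.
  assert (E : (beta * k * m^2 - 8) * (beta * k * n^2 - 8)
              = beta^2 * (k^2 * m^2 * n^2) - 8 * beta * k * (m^2 + n^2) + 64) by ring.
  rewrite E.
  assert (HA : (k^2 * m^2 * n^2)^2 - s^2 = 32 * k * (m^2 + n^2)) by nia.
  remember (k^2 * m^2 * n^2) as A eqn:HAdef.
  split.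
  - intro H.
    assert (Hb : beta * (A - beta) = 8 * k * (m^2 + n^2)).
    { assert (s = A - 2 * beta) by lia. subst s. nia. }
    split.
    + exists (beta * k * m^2 * n^2 - 8 * (m^2 + n^2)).
      assert (beta^2 = beta * A - 8 * k * (m^2+n^2)) by nia.
      rewrite H0, HAdef. ring.
    + nia.
  - intro H.
    remember (A - s) as d eqn:Hdd.
    assert (Hd : d * (2 * A - d) = 32 * k * (m^2 + n^2)) by (subst d; nia).
    assert (P : (2 * beta - d) * (2 * beta + d - 2 * A) >= 0) by (subst d; nia).
    assert (4 * (beta^3 + 64) - 4 * (beta ^ 2 * A - 8 * beta * k * (m ^ 2 + n ^ 2) + 64)
            = beta * ((2 * beta - d) * (2 * beta + d - 2 * A))) by nia.
    nia.
Qed.
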